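(* Let $d\geq 0$ and $0<i\leq d+1$ be integers, and write $d+1=qi+r$ with integers $q\geq 0$, $1\leq r\leq i$. Let $\Delta\in\mathcal{C}(i,d)$. Then $f_0(\Delta)\geq f_0(S(i,d))=q(i+1)+r+1$.
   Context: All simplicial complexes are finite abstract simplicial complexes; $f_j(\Delta)$ denotes the number of $j$-dimensional faces of $\Delta$. A set $F$ of vertices is a missing face of $\Delta$ if $F\notin\Delta$ but every proper subset of $F$ is in $\Delta$; its dimension is $|F|-1$. $\mathcal{C}(i,d)$ denotes the family of $d$-dimensional simplicial complexes $\Delta$ with $\tilde H_d(\Delta;\mathbb{Z})\neq 0$ (reduced homology) and with no missing faces of dimension $>i$. For integers $d\geq 0$, $i>0$ with $d+1=qi+r$ ($q\geq 0$, $1\leq r\leq i$), $S(i,d)$ is the simplicial join of $q$ copies of $\partial\sigma^i$ and one copy of $\partial\sigma^r$ on pairwise disjoint vertex sets, where $\partial\sigma^k$ is the boundary complex of the $k$-simplex. *)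

(* Defs.v *)
From HB Require Import structures.
From mathcomp Require Import all_boot all_order all_algebra.
Set Implicit Arguments. Unset Strict Implicit. Unset Printing Implicit Defensive.
Import Order.TTheory GRing.Theory Num.Theory.

Section Complexes.
Variable n : nat.
Notation face := {set 'I_n}.

Definition is_complex (D : {set face}) : Prop :=
  set0 \in D /\ forall F G : face, F \in D -> G \subset F -> G \in D.

Definition has_dim (D : {set face}) (d : nat) : Prop :=
  (exists2 F, F \in D & #|F| = d.+1) /\ (forall F, F \in D -> #|F| <= d.+1)%N.

Definition f0 (D : {set face}) : nat := #|[set v : 'I_n | [set v] \in D]|.

Definition missing_face (D : {set face}) (F : face) : Prop :=
  F \notin D /\ forall G : face, G \proper F -> G \in D.

(* simplicial boundary of a k-chain c (a Z-valued function on faces; only its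
   values on k-faces, i.e. faces with k+1 vertices, matter).  Orientation is
   induced by the order on 'I_n: removing v from F gets sign
   (-1)^(number of vertices of F below v).  For k = 0 this is the augmentation
   to the (-1)-chains supported on the empty face (reduced homology). *)
Definition bd (D : {set face}) (k : nat) (c : face -> int) (G : face) : int :=
  (\sum_(F in D | #|F| == k.+1)
     \sum_(v in F | G == F :\ v) (-1) ^+ #|[set u in F | (val u < val v)%N]| * c F)%R.

Definition red_hom_nonzero (D : {set face}) (k : nat) : Prop :=
  exists z : face -> int,
    [/\ (forall F, z F != 0%R -> F \in D /\ #|F| = k.+1),
        (forall G, bd D k z G = 0%R)
      & ~ (exists b : face -> int, forall G, bd D k.+1 b G = z G)]
    /\ exists F, z F != 0%R.

Definition in_C (i d : nat) (D : {set face}) : Prop :=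
  [/\ is_complex D, has_dim D d, red_hom_nonzero D d
    & forall F, missing_face D F -> (#|F|.-1 <= i)%N].
End Complexes.

(* S(i,d) for d+1 = q*i + r: join of q copies of the boundary of the i-simplex
   (blocks of i+1 vertices) and one copy of the boundary of the r-simplex
   (last block of r+1 vertices), on the vertex set 'I_(q*(i+1) + (r+1)).
   Vertex v lies in block minn (v / (i+1)) q; a face of the join is a set of
   vertices containing no full block. *)
Definition Sblock (q i r : nat) (v : 'I_(q * i.+1 + r.+1)) : nat :=
  minn (v %/ i.+1) q.

Definition S_complex (q i r : nat) : {set {set 'I_(q * i.+1 + r.+1)}} :=
  [set F : {set 'I_(q * i.+1 + r.+1)} | [forall b : 'I_q.+1,
             ~~ ([set v | Sblock v == val b] \subset F)]].

(* Main.v *)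
Require Import Defs.
From HB Require Import structures.
From mathcomp Require Import all_boot all_order all_algebra.
Set Implicit Arguments. Unset Strict Implicit. Unset Printing Implicit Defensive.

Lemma cardsU_disj (T : finType) (A B : {set T}) :
  (forall u, u \in A -> u \notin B) -> #|A :|: B| = #|A| + #|B|.
Proof.
move=> H; rewrite cardsU.
have -> : A :&: B = set0.
  apply/setP=> u; rewrite !inE; case/boolP: (u \in A) => //= /H /negbTE //.
by rewrite cards0 subn0.
Qed.

Lemma grow (T : finType) (A B : {set T}) j :
  A \subset B -> #|A| + j <= #|B| ->
  exists C : {set T}, [/\ A \subset C, C \subset B & #|C| = #|A| + j].
Proof.
move=> AB; elim: j => [|j IH] Hj.
  by exists A; rewrite addn0.
have Hj' : #|A| + j <= #|B| by apply: leq_trans Hj; rewrite leq_add2l.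
have [C [AC CB cC]] := IH Hj'.
have : ~~ (B \subset C).
  apply/negP=> /subset_leq_card; rewrite cC; apply/negP; rewrite -ltnNge.
  by apply: leq_trans Hj; rewrite addnS.
case/subsetPn=> y yB yC.
exists (y |: C); split.
- by apply: subset_trans AC (subsetUr _ _).
- by rewrite subUset sub1set yB CB.
- by rewrite cardsU1 yC cC addnS add1n.
Qed.

Lemma other (T : finType) (F F' : {set T}) x :
  x \in F -> F :\ x \subset F' -> #|F'| = #|F| -> F' != F ->
  x \notin F' /\ exists w, w \in F' /\ w \notin F.
Proof.
move=> xF sub cF ne; split.
  apply/negP=> xF'; move/negP: ne; apply; rewrite eq_sym eqEcard cF leqnn andbT.
  by rewrite -(setD1K xF) subUset sub1set xF' sub.
have : ~~ (F' \subset F).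
  by apply/negP=> s; move/negP: ne; apply; rewrite eqEcard s cF leqnn.
by case/subsetPn=> w wF' wF; exists w.
Qed.

Lemma minnonface n (D : {set {set 'I_n}}) (X : {set 'I_n}) :
  X \notin D -> exists G : {set 'I_n}, [/\ G \subset X, G \notin D & missing_face D G].
Proof.
move=> XD.
have ex : exists k, [exists G : {set 'I_n}, [&& G \subset X, G \notin D & #|G| == k]].
  by exists #|X|; apply/existsP; exists X; rewrite subxx XD eqxx.
case: (ex_minnP ex) => k /existsP [G /and3P [GX GD /eqP cG]] Hmin.
exists G; split => //; split => // G' pG'.
apply/negPn/negP => G'D.
have : k <= #|G'|.
  apply: Hmin; apply/existsP; exists G'.
  by rewrite G'D (subset_trans (proper_sub pG') GX) eqxx.
by rewrite -cG leqNgt proper_card.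
Qed.

From Stdlib Require Import Lia.

Definition Vs n (D : {set {set 'I_n}}) (s : {set 'I_n}) : {set 'I_n} :=
  [set u | (u \notin s) && ((u |: s) \in D)].

Lemma key n (D : {set {set 'I_n}}) (i m : nat) :
  0 < i ->
  (forall F G : {set 'I_n}, F \in D -> G \subset F -> G \in D) ->
  (forall G, missing_face D G -> #|G|.-1 <= i) ->
  (forall F, F \in D -> #|F| <= m) ->
  forall q r (s : {set 'I_n}) (S : {set {set 'I_n}}),
  1 <= r <= i -> #|s| + (q * i + r) = m ->
  (exists F, F \in S) ->
  (forall F, F \in S -> [/\ #|F| = q * i + r, (forall u, u \in F -> u \notin s) & F :|: s \in D]) ->
  (forall F x, F \in S -> x \in F -> exists F', [/\ F' \in S, F' != F & F :\ x \subset F']) ->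
  q * i.+1 + r + 1 <= #|Vs D s|.
Proof.
move=> i0 down miss dim q; elim: q => [|q IH] r s S /andP [r1 ri] cs [F0 F0S] HS HP.
  have [cF0 dF0 F0D] := HS F0 F0S.
  have : 0 < #|F0| by rewrite cF0 mul0n add0n.
  rewrite card_gt0 => /set0Pn [x xF0].
  have [F' [F'S ne sub]] := HP F0 x F0S xF0.
  have [cF' dF' F'D] := HS F' F'S.
  have [_ [w [wF' wF0]]] := other xF0 sub (etrans cF' (esym cF0)) ne.
  have -> : 0 * i.+1 + r + 1 = #|w |: F0|.
    by rewrite cardsU1 wF0 cF0 !mul0n !add0n add1n addn1.
  apply: subset_leq_card; apply/subsetP => u; rewrite /Vs !inE => /orP [/eqP -> | uF0].
    by rewrite dF' //=; apply: down F'D _; apply: setSU; rewrite sub1set.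
  by rewrite dF0 //=; apply: down F0D _; apply: setSU; rewrite sub1set.
have [cF0 dF0 F0D] := HS F0 F0S.
have : 0 < #|F0| by rewrite cF0; apply: leq_trans r1 _; apply: leq_addl.
rewrite card_gt0 => /set0Pn [v vF0].
have [F [FS ne sub]] := HP F0 v F0S vF0.
have [cF dF FD] := HS F FS.
have [vF _] := other vF0 sub (etrans cF (esym cF0)) ne.
have vs : v \notin s := dF0 v vF0.
have XD : v |: (F :|: s) \notin D.
  apply/negP => /dim; rewrite cardsU1 inE negb_or vF vs /= cardsU_disj // cF -cs.
  by rewrite add1n addnC ltnn.
have [G [GX GD Gm]] := minnonface XD.
have cG := miss G Gm.
have vG : v \in G.
  apply/negPn/negP => vG; move/negP: GD; apply; apply: down FD _.
  apply/subsetP => u uG; have := subsetP GX u uG; rewrite !inE.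
  by case/orP => // /eqP Huv; move: uG; rewrite Huv (negbTE vG).
set tau := (G :\ v) :\: s.
have tauF : tau \subset F.
  apply/subsetP => u; rewrite !inE => /andP [us /andP [uv uG]].
  have := subsetP GX u uG; rewrite !inE (negbTE uv) (negbTE us) /=.
  by rewrite orbF.
have ctau : #|tau| <= i.
  apply: leq_trans cG; apply: leq_trans (subset_leq_card (subsetDl _ _)) _.
  by rewrite (cardsD1 v G) vG.
have Fi : #|tau| + (i - #|tau|) <= #|F|.
  by rewrite subnKC // cF mulSn -addnA leq_addr.
have [C [tauC CF cC]] := grow tauF Fi.
rewrite subnKC // in cC.
have Cs : forall u, u \in C -> u \notin s.
  by move=> u uC; apply: dF; apply: (subsetP CF).
set S' := [set F' :\: C | F' in [set F' in S | C \subset F']].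
have HIH := IH r (s :|: C) S' (introT andP (conj r1 ri)).
have cs' : #|s :|: C| + (q * i + r) = m.
  rewrite cardsU_disj; last by move=> u us; apply/negP => /Cs; rewrite us.
  rewrite cC -cs; rewrite -!plusE -!multE; lia.
have ex' : exists F1, F1 \in S'.
  by exists (F :\: C); apply/imsetP; exists F => //; rewrite inE FS CF.
have HS' : forall F1, F1 \in S' -> [/\ #|F1| = q * i + r,
    (forall u, u \in F1 -> u \notin s :|: C) & F1 :|: (s :|: C) \in D].
  move=> F1 /imsetP [F' ]; rewrite inE => /andP [F'S CF'] ->.
  have [cF' dF' F'D] := HS F' F'S.
  split.
  - rewrite cardsD (setIidPr CF') cF' cC; rewrite -!plusE -!multE -!minusE; lia.
  - move=> u; rewrite !inE negb_or => /andP [uC uF']; rewrite uC andbT; exact: dF'.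
  - suff -> : F' :\: C :|: (s :|: C) = F' :|: s by [].
    apply/setP => u; rewrite !inE; case: (boolP (u \in C)) => uC.
      by rewrite (subsetP CF' u uC) /= !orbT.
    by rewrite /= orbF.
have HP' : forall F1 x, F1 \in S' -> x \in F1 ->
    exists F', [/\ F' \in S', F' != F1 & F1 :\ x \subset F'].
  move=> F1 x /imsetP [F' ]; rewrite inE => /andP [F'S CF'] -> {F1}.
  rewrite inE => /andP [xC xF'].
  have [F2 [F2S ne2 sub2]] := HP F' x F'S xF'.
  have CF2 : C \subset F2.
    apply: subset_trans sub2; apply/subsetP => u uC; rewrite !inE (subsetP CF' u uC) andbT.
    by apply/eqP => Hu; move: xC; rewrite -Hu uC.
  exists (F2 :\: C); split.
  - by apply/imsetP; exists F2 => //; rewrite inE F2S CF2.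
  - apply/negP => /eqP Heq; move/negP: ne2; apply; apply/eqP.
    by rewrite -(setID F2 C) -(setID F' C) (setIidPr CF2) (setIidPr CF') Heq.
  - apply/subsetP => u; rewrite !inE => /andP [ux /andP [uC uF']].
    by rewrite uC /=; apply: (subsetP sub2); rewrite !inE ux uF'.
have IHb := HIH cs' ex' HS' HP'.
have vC : v \notin C by apply/negP => /(subsetP CF); rewrite (negbTE vF).
have vV : v \notin Vs D (s :|: C).
  rewrite /Vs inE negb_and; apply/orP; right; apply/negP => HD.
  move/negP: GD; apply; apply: down HD _.
  apply/subsetP => u uG; rewrite !inE.
  case: (boolP (u == v)) => //= uv.
  case: (boolP (u \in s)) => //= us.
  apply: (subsetP tauC); by rewrite !inE us uv uG.
have CV : forall u, u \in C -> u \notin Vs D (s :|: C).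
  by move=> u uC; rewrite /Vs !inE uC orbT.
have Hsub : v |: (C :|: Vs D (s :|: C)) \subset Vs D s.
  apply/subsetP => u; rewrite !inE => /or3P [/eqP -> | uC | ].
  - by rewrite vs /=; apply: down F0D _; apply: setSU; rewrite sub1set.
  - rewrite Cs //=; apply: down FD _; apply: setSU; rewrite sub1set.
    exact: (subsetP CF).
  - rewrite /Vs ?inE ?negb_or => /andP [/andP [us _] uD]; rewrite us /=.
    apply: down uD _; apply: setUS; exact: subsetUl.
have := subset_leq_card Hsub.
rewrite cardsU1 inE negb_or vC vV /= cardsU_disj // cC.
move=> H2; apply: leq_trans H2.
move/leP: IHb => IHb; apply/leP; rewrite -!plusE -!multE in IHb *; lia.
Qed.

Lemma f0S (q i r : nat) : 0 < i -> 1 <= r ->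
  f0 (S_complex q i r) = q * i.+1 + r + 1.
Proof.
move=> i0 r1; rewrite /f0.
have -> : [set v | [set v] \in S_complex q i r] = setT.
  apply/setP => v; rewrite !inE; apply/forallP => b; apply/negP => Hsub.
  have bq : b <= q by rewrite -ltnS ltn_ord.
  have h2 : b * i.+1 + 1 < q * i.+1 + r.+1.
    have := leq_mul2r i.+1 b q; rewrite bq orbT => /leP Hb; apply/leP; rewrite -!plusE -!multE in Hb *; have /leP r1' := r1; lia.
  have h1 : b * i.+1 < q * i.+1 + r.+1 by apply: leq_trans h2; rewrite addn1.
  have blk : forall e (h : b * i.+1 + e < q * i.+1 + r.+1), e < i.+1 ->
      Ordinal h \in [set v | Sblock v == val b].
    move=> e h ei; rewrite inE /Sblock /=. rewrite divnMDl // divn_small // addn0.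
    by apply/eqP/minn_idPl.
  have h0 : b * i.+1 + 0 < q * i.+1 + r.+1 by rewrite addn0.
  have := subsetP Hsub _ (blk 0 h0 isT); rewrite inE => /eqP E0.
  have := subsetP Hsub _ (blk 1 h2 i0); rewrite inE => /eqP E1.
  have := congr1 val (etrans E0 (esym E1)) => /=; rewrite addn0 => /eqP.
  by rewrite -{1}[b * i.+1]addn0 eqn_add2l.
by rewrite cardsT card_ord addn1 addnS.
Qed.

Theorem theorem1p1 (n d i q r : nat) (D : {set {set 'I_n}}) :
  (0 < i)%N -> (i <= d.+1)%N -> d.+1 = (q * i + r)%N -> (1 <= r <= i)%N ->
  in_C i d D ->
  (f0 (S_complex q i r) <= f0 D)%N /\
  f0 (S_complex q i r) = (q * i.+1 + r + 1)%N.
Proof.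
move=> i0 id dq /andP [r1 ri] [[_ down] [_ dim] [z [[Hsupp Hcyc _] [F1 zF1]]] miss].
rewrite f0S //; split => //.
set S := [set F | z F != 0%R].
have := key i0 down miss dim (s := set0) (S := S) (introT andP (conj r1 ri)).
have -> : Vs D set0 = [set v | [set v] \in D].
  by apply/setP => u; rewrite !inE setU0.
rewrite /f0; apply.
- by rewrite cards0 add0n.
- by exists F1; rewrite inE.
- move=> F; rewrite inE => /Hsupp [FD cF]; split.
  + by rewrite cF.
  + by move=> u; rewrite inE.
  + by rewrite setU0.
move=> F x; rewrite inE => zF xF.
have [FD cF] := Hsupp F zF.
case: (boolP [exists F' : {set 'I_n}, [&& z F' != 0%R, F' != F & F :\ x \subset F']]).
  by case/existsP => F' /and3P [zF' ne sub]; exists F'; rewrite inE zF' ne sub.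
move=> Hno; exfalso.
have := Hcyc (F :\ x); rewrite /bd (bigD1 F) /=; last by rewrite FD cF eqxx.
rewrite [X in (_ + X)%R]big1 ?GRing.addr0; last first.
  move=> F' /andP [_ ne]; apply: big1 => v /andP [vF' /eqP HG].
  case: (eqVneq (z F') 0%R) => [-> | nz]; first by rewrite GRing.mulr0.
  exfalso; move/existsP: Hno; apply; exists F'; rewrite nz ne HG subsetDl.
  by [].
rewrite (big_pred1 x); last first.
  move=> v /=; apply/andP/eqP => [[vF /eqP E] | ->]; last by rewrite xF eqxx.
  apply/eqP/negPn/negP => vx.
  have : v \in F :\ x by rewrite !inE vF vx.
  by rewrite E !inE eqxx.
move=> /eqP; rewrite GRing.mulf_eq0 GRing.signr_eq0 /=.
by rewrite (negbTE zF).
Qed.
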